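(* Let $N\ge0$, let $H_0\in\mathbb{R}$ and $H_n:\mathbb{Z}^n\to\mathbb{R}$ ($1\le n\le N$) be finitely supported kernels, and let $f(x)=\sum_{n=0}^{N}H_n*x^n$. For finitely supported signals $x,\epsilon:\mathbb{Z}\to\mathbb{R}$, $$\|f(x+\epsilon)-f(x)\|_2\le\min\left(\sum_{n=0}^{N}\|H_n\|_2\sum_{k=0}^{n-1}\Big(\frac{en}{k}\Big)^k\|x\|_1^k\|\epsilon\|_1^{n-k},\ \sum_{n=0}^{N}\|H_n\|_1\sum_{k=0}^{n-1}\Big(\frac{en}{k}\Big)^k\|x\|_{2k}^k\|\epsilon\|_{2(n-k)}^{n-k}\right),$$ where $e$ is the base of the natural logarithm.
   Context: Signals are real functions on $\mathbb{Z}$. For a kernel $H:\mathbb{Z}^n\to\mathbb{R}$ ($n\ge1$) and signals $x_1,\dots,x_n$, the order-$n$ convolution is $(H*[x_1,\dots,x_n])(t)=\sum_{(\tau_1,\dots,\tau_n)\in\mathbb{Z}^n}H(\tau_1,\dots,\tau_n)\prod_{i=1}^n x_i(t-\tau_i)$, and $H*x^n$ denotes $H*[x,\dots,x]$ ($n$ copies); for $n=0$, $H_0*x^0$ is the constant signal $H_0$. For a function $A$ on $\mathbb{Z}^d$, $\|A\|_p=(\sum_{\tau}|A(\tau)|^p)^{1/p}$. Empty sums are $0$; in the $k=0$ terms, $(en/k)^k$ and $\|x\|_{2k}^k$ are interpreted as $1$. *)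

(* Defs.v *)
From HB Require Import structures.
From mathcomp Require Import all_boot all_order all_algebra.
From mathcomp Require Import boolp classical_sets functions cardinality fsbigop.
From mathcomp Require Import reals sequences exp.
Set Implicit Arguments. Unset Strict Implicit. Unset Printing Implicit Defensive.
Import Order.TTheory GRing.Theory Num.Theory.
Local Open Scope classical_set_scope.
Local Open Scope ring_scope.

Definition Zn (n : nat) := {ffun 'I_n -> int}.

(* Sum over the whole (possibly infinite) type of a finitely supported function
   (fsbigop: the sum over its finite support). *)
Definition fsum (R : realType) (T : choiceType) (A : T -> R) : R :=
  \sum_(t \in [set: T]) A t.

Definition lpnorm (R : realType) (T : choiceType) (p : R) (A : T -> R) : R :=
  powR (fsum (fun t => powR `|A t| p)) p^-1.

Definition convn (R : realType) (n : nat) (H : Zn n -> R) (xs : 'I_n -> int -> R)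
    (t : int) : R :=
  fsum (fun tau : Zn n => H tau * \prod_(i < n) xs i (t - tau i)).

(* H * x^n ;  for n = 0 this is the constant H (the unique point of Z^0) *)
Definition convpow (R : realType) (n : nat) (H : Zn n -> R) (x : int -> R) : int -> R :=
  convn H (fun _ => x).

Definition volterra (R : realType) (N : nat) (H : forall n : nat, Zn n -> R)
    (x : int -> R) : int -> R :=
  fun t => \sum_(n < N.+1) convpow (H n) x t.

Definition fin_supp (T : Type) (R : realType) (A : T -> R) : Prop :=
  finite_set [set t | A t != 0].

Definition term1 (R : realType) (n k : nat) (x eps : int -> R) : R :=
  (if k == 0%N then 1 else (expR 1 * n%:R / k%:R) ^+ k * lpnorm 1 x ^+ k)
  * lpnorm 1 eps ^+ (n - k).

Definition term2 (R : realType) (n k : nat) (x eps : int -> R) : R :=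
  (if k == 0%N then 1
   else (expR 1 * n%:R / k%:R) ^+ k * lpnorm (2 * k)%:R x ^+ k)
  * lpnorm (2 * (n - k))%:R eps ^+ (n - k).

Definition bound1 (R : realType) (N : nat) (H : forall n : nat, Zn n -> R)
    (x eps : int -> R) : R :=
  \sum_(n < N.+1) lpnorm 2 (H n) * \sum_(k < n) term1 n k x eps.

Definition bound2 (R : realType) (N : nat) (H : forall n : nat, Zn n -> R)
    (x eps : int -> R) : R :=
  \sum_(n < N.+1) lpnorm 1 (H n) * \sum_(k < n) term2 n k x eps.

(* Main.v *)
Require Import Defs.
From HB Require Import structures.
From mathcomp Require Import all_boot all_order all_algebra.
From mathcomp Require Import boolp classical_sets functions cardinality fsbigop.
From mathcomp Require Import reals sequences exp.
From mathcomp Require Import ring lra.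
Import Order.TTheory GRing.Theory Num.Theory.
Local Open Scope ring_scope.
Set Implicit Arguments. Unset Strict Implicit.

Section Tools.
Variable R : realType.

Definition L2 (T : choiceType) (f : T -> R) := Num.sqrt (fsum (fun t => f t ^+ 2)).

Definition supp_in (T : eqType) (f : T -> R) (r : seq T) :=
  forall t, f t != 0 -> t \in r.

Lemma supp_out (T : eqType) (f : T -> R) r : supp_in f r ->
  forall t, t \notin r -> f t = 0.
Proof. by move=> h t tr; apply/eqP; apply: (contraNT (h t)). Qed.

Lemma fsumE (T : choiceType) (r : seq T) (F : T -> R) :
  uniq r -> (forall t, t \notin r -> F t = 0) -> fsum F = \sum_(t <- r) F t.
Proof.
move=> ur F0; rewrite /fsum (fsbigE r) //.
- by apply: eq_bigl => t; rewrite classical_sets.in_setT.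
- by move=> t _ tr; apply: F0.
Qed.

Lemma fs_seq (T : choiceType) (f : T -> R) : fin_supp f ->
  exists r : seq T, uniq r /\ supp_in f r.
Proof.
move=> fs; exists (finmap.enum_fset (fset_set [set t | f t != 0])); split; first exact: finmap.fset_uniq.
by move=> t ft; rewrite in_fset_set //; apply: mem_set.
Qed.

Lemma seq_fs (T : choiceType) (f : T -> R) (r : seq T) : supp_in f r -> fin_supp f.
Proof. by move=> h; apply: (sub_finite_set _ (finite_seq r)) => t /= ft; exact: h. Qed.

Lemma fs0 (T : choiceType) : fin_supp (fun _ : T => 0 : R).
Proof. by apply: (@seq_fs _ _ [::]) => t; rewrite eqxx. Qed.

Lemma fs_add (T : choiceType) (f g : T -> R) : fin_supp f -> fin_supp g ->
  fin_supp (fun t => f t + g t).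
Proof.
move=> /fs_seq [rf [_ hf]] /fs_seq [rg [_ hg]]; apply: (@seq_fs _ _ (rf ++ rg)).
move=> t; rewrite mem_cat; apply: contraNT; rewrite negb_or => /andP[tf tg].
by rewrite (supp_out hf) ?(supp_out hg) ?addr0.
Qed.

Lemma fs_scale (T : choiceType) (c : R) (f : T -> R) : fin_supp f ->
  fin_supp (fun t => c * f t).
Proof.
move=> /fs_seq [rf [_ hf]]; apply: (@seq_fs _ _ rf) => t; apply: contraNT => tf.
by rewrite (supp_out hf) ?mulr0.
Qed.

Lemma L2_ge0 (T : choiceType) (f : T -> R) : 0 <= L2 f.
Proof. exact: sqrtr_ge0. Qed.

Lemma L2_seq (T : choiceType) (f : T -> R) r : uniq r -> supp_in f r ->
  L2 f = Num.sqrt (\sum_(t <- r) f t ^+ 2).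
Proof.
by move=> ur hf; rewrite /L2 (fsumE ur) // => t tr; rewrite (supp_out hf) // expr0n.
Qed.

Lemma L2_0 (T : choiceType) : L2 (fun _ : T => 0 : R) = 0.
Proof. by rewrite (@L2_seq _ _ [::]) // ?big_nil ?sqrtr0 // => t; rewrite eqxx. Qed.

Lemma CS2 (I : Type) (r : seq I) (a b : I -> R) :
  (\sum_(i <- r) a i * b i) ^+ 2 <= (\sum_(i <- r) a i ^+ 2) * (\sum_(i <- r) b i ^+ 2).
Proof.
have h : 0 <= \sum_(i <- r) \sum_(j <- r) (a i * b j - a j * b i) ^+ 2.
  by apply: sumr_ge0 => i _; apply: sumr_ge0 => j _; apply: sqr_ge0.
have e : \sum_(i <- r) \sum_(j <- r) (a i * b j - a j * b i) ^+ 2 =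
   (\sum_(i <- r) a i ^+ 2) * (\sum_(i <- r) b i ^+ 2) +
   (\sum_(i <- r) b i ^+ 2) * (\sum_(i <- r) a i ^+ 2) -
   2 * ((\sum_(i <- r) a i * b i) * (\sum_(i <- r) a i * b i)).
  rewrite !mulr_suml mulr_sumr -big_split -sumrB; apply: eq_bigr => i _.
  rewrite !mulr_sumr -!big_split -sumrB; apply: eq_bigr => j _.
  rewrite /=; ring.
rewrite e in h; nra.
Qed.

Lemma mink_seq (I : Type) (r : seq I) (a b : I -> R) :
  Num.sqrt (\sum_(i <- r) (a i + b i) ^+ 2) <=
  Num.sqrt (\sum_(i <- r) a i ^+ 2) + Num.sqrt (\sum_(i <- r) b i ^+ 2).
Proof.
set A := \sum_(i <- r) a i ^+ 2; set B := \sum_(i <- r) b i ^+ 2.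
set C := \sum_(i <- r) a i * b i.
have A0 : 0 <= A by apply: sumr_ge0 => i _; apply: sqr_ge0.
have B0 : 0 <= B by apply: sumr_ge0 => i _; apply: sqr_ge0.
have Y0 : 0 <= Num.sqrt A + Num.sqrt B by rewrite addr_ge0 ?sqrtr_ge0.
rewrite -(ger0_norm Y0) -sqrtr_sqr ler_sqrt ?sqr_ge0 //.
have -> : \sum_(i <- r) (a i + b i) ^+ 2 = A + 2 * C + B.
  rewrite /A /B /C mulr_sumr -!big_split; apply: eq_bigr => i _; rewrite /=; ring.
have hC : C <= Num.sqrt A * Num.sqrt B.
  rewrite -sqrtrM // (le_trans (ler_norm C)) // -sqrtr_sqr ler_sqrt ?mulr_ge0 //.
  exact: CS2.
have sA := sqr_sqrtr A0; have sB := sqr_sqrtr B0.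
nra.
Qed.

Lemma L2_add (T : choiceType) (f g : T -> R) : fin_supp f -> fin_supp g ->
  L2 (fun t => f t + g t) <= L2 f + L2 g.
Proof.
move=> /fs_seq [rf [_ hf]] /fs_seq [rg [_ hg]].
set r := undup (rf ++ rg).
have ur : uniq r by apply: undup_uniq.
have hf' : supp_in f r by move=> t /hf; rewrite mem_undup mem_cat => ->.
have hg' : supp_in g r by move=> t /hg; rewrite mem_undup mem_cat orbC => ->.
have hfg : supp_in (fun t => f t + g t) r.
  move=> t; apply: contraNT => tr; by rewrite (supp_out hf') ?(supp_out hg') ?addr0.
by rewrite (L2_seq ur hf') (L2_seq ur hg') (L2_seq ur hfg) mink_seq.
Qed.

Lemma L2_scale (T : choiceType) (c : R) (f : T -> R) :
  L2 (fun t => c * f t) = `|c| * L2 f.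
Proof.
rewrite /L2 -sqrtr_sqr -sqrtrM ?sqr_ge0 // /fsum mulr_fsumr.
by congr Num.sqrt; apply: eq_fsbigr => t _; rewrite exprMn.
Qed.

Lemma L2_ext (T : choiceType) (f g : T -> R) : (forall t, f t = g t) -> L2 f = L2 g.
Proof. by move=> h; congr L2; apply: funext. Qed.

Lemma L2_sum (T : choiceType) (I : Type) (r : seq I) (P : pred I) (F : I -> T -> R) :
  (forall i, P i -> fin_supp (F i)) ->
  L2 (fun t => \sum_(i <- r | P i) F i t) <= \sum_(i <- r | P i) L2 (F i)
  /\ fin_supp (fun t => \sum_(i <- r | P i) F i t).
Proof.
move=> hF; elim: r => [|i r [IH1 IH2]].
  rewrite big_nil; under L2_ext do rewrite big_nil.
  rewrite L2_0; split => //.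
  by under eq_fun do rewrite big_nil; apply: fs0.
rewrite big_cons; case: ifP => Pi.
  under L2_ext do rewrite big_cons Pi.
  split; last by under eq_fun do rewrite big_cons Pi; apply: fs_add => //; apply: hF.
  apply: le_trans (L2_add (hF _ Pi) IH2) _; exact: lerD.
under L2_ext do rewrite big_cons Pi.
by split => //; under eq_fun do rewrite big_cons Pi.
Qed.

End Tools.
Section Tools2.
Variable R : realType.

Lemma sum_le_fsum (r : seq int) (g : int -> R) : uniq r -> (forall t, 0 <= g t) ->
  fin_supp g -> \sum_(t <- r) g t <= fsum g.
Proof.
move=> ur g0 /fs_seq [rg [urg hg]].
set q := r ++ [seq u <- rg | u \notin r].
have uq : uniq q.
  rewrite cat_uniq ur filter_uniq // andbT; apply/hasPn => u.
  by rewrite mem_filter => /andP[].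
rewrite (fsumE uq); last first.
  move=> t; rewrite mem_cat mem_filter negb_or => /andP[tr]; rewrite tr /=.
  exact: supp_out.
by rewrite big_cat /= lerDl sumr_ge0.
Qed.

Lemma shift_le_fsum (r : seq int) (c : int) (g : int -> R) : uniq r ->
  (forall t, 0 <= g t) -> fin_supp g -> \sum_(t <- r) g (t - c) <= fsum g.
Proof.
move=> ur g0 fg; rewrite -(big_map (fun t => t - c) predT g).
apply: sum_le_fsum => //; rewrite map_inj_uniq // => u v; exact: addIr.
Qed.

Lemma inj_le_sum (A : eqType) (B : finType) (s : seq A) (g : A -> B) (F : B -> R) :
  uniq s -> (forall b, 0 <= F b) ->
  {in s &, forall a a', F (g a) != 0 -> g a = g a' -> a = a'} ->
  \sum_(a <- s) F (g a) <= \sum_b F b.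
Proof.
move=> us F0 inj.
rewrite (bigID (fun a => F (g a) != 0)) /= [X in _ + X]big1 ?addr0; last first.
  by move=> a; rewrite negbK => /eqP.
rewrite -big_filter -(big_map g predT F) big_uniq; last first.
  rewrite map_inj_in_uniq ?filter_uniq // => a a'.
  rewrite !mem_filter => /andP[Pa sa] /andP[_ sa']; exact: inj.
rewrite big_mkcond; apply: ler_sum => b _; case: ifP => // _; exact: F0.
Qed.

Lemma prod_sum_le (n : nat) (y : 'I_n -> int -> R) (r : seq int) (s : seq (Zn n)) :
  uniq r -> uniq s -> (forall i, supp_in (y i) r) ->
  \sum_(sg <- s) \prod_(i < n) `|y i (sg i)| <=
  \prod_(i < n) fsum (fun u => `|y i u|).
Proof.
move=> ur us hy.
pose K := size r.
pose z (i : 'I_n) (j : 'I_K.+1) : R :=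
  if (j < K)%N then `|y i (nth 0 r j)| else 0.
have z0 i j : 0 <= z i j by rewrite /z; case: ifP.
have E1 i : fsum (fun u => `|y i u|) = \sum_(j : 'I_K.+1) z i j.
  rewrite (fsumE ur); last by move=> t tr; rewrite (supp_out (hy i)) // normr0.
  rewrite big_ord_recr /= {2}/z ltnn addr0 (big_nth 0) big_mkord.
  by apply: eq_bigr => j _; rewrite /z /= ltn_ord.
rewrite (eq_bigr _ (fun i _ => E1 i)).
rewrite bigA_distr_bigA /=.
pose g (sg : Zn n) : {ffun 'I_n -> 'I_K.+1} :=
  [ffun i => inord (index (sg i) r)].
have gK (sg : Zn n) i : (g sg i : nat) = index (sg i) r.
  by rewrite ffunE inordK // ltnS index_size.
have E2 (sg : Zn n) : \prod_(i < n) `|y i (sg i)| = \prod_(i < n) z i (g sg i).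
  apply: eq_bigr => i _; rewrite /z gK index_mem.
  case: ifP => [si|/negbT si]; first by rewrite nth_index.
  by rewrite (supp_out (hy i)) // normr0.
under eq_bigr do rewrite E2.
apply: (inj_le_sum (F := fun f : {ffun 'I_n -> 'I_K.+1} => \prod_(i < n) z i (f i))) => //.
  by move=> f; apply: prodr_ge0 => i _.
move=> a a' _ _ nz eqg; apply/ffunP => i.
have ia : (index (a i) r < K)%N.
  apply: contraNT nz => h; rewrite (bigD1 i) //= /z gK (negbTE h) mul0r //.
have ia' : (index (a' i) r < K)%N by rewrite -gK -eqg gK.
have := congr1 (fun f : {ffun 'I_n -> 'I_K.+1} => (f i : nat)) eqg.
rewrite /= !gK => ei.
have h1 : a i \in r by rewrite -index_mem.
have h2 : a' i \in r by rewrite -index_mem.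
by rewrite -(nth_index 0 h1) ei (nth_index 0 h2).
Qed.

Lemma wCS (I : Type) (s : seq I) (a b : I -> R) : (forall i, 0 <= b i) ->
  (\sum_(i <- s) a i * b i) ^+ 2 <= (\sum_(i <- s) a i ^+ 2 * b i) * (\sum_(i <- s) b i).
Proof.
move=> b0.
have := CS2 s (fun i => a i * Num.sqrt (b i)) (fun i => Num.sqrt (b i)).
have e1 i : a i * Num.sqrt (b i) * Num.sqrt (b i) = a i * b i.
  by rewrite -mulrA -expr2 sqr_sqrtr.
have e2 i : (a i * Num.sqrt (b i)) ^+ 2 = a i ^+ 2 * b i.
  by rewrite exprMn sqr_sqrtr.
have e3 i : Num.sqrt (b i) ^+ 2 = b i by rewrite sqr_sqrtr.
by under eq_bigr do rewrite e1; under [X in _ <= X * _]eq_bigr do rewrite e2;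
   under [X in _ <= _ * X]eq_bigr do rewrite e3.
Qed.

End Tools2.
Section Tools3.
Variable R : realType.

Lemma amgm_pt (n : nat) (A : {set 'I_n}) (a : 'I_n -> R) :
  (0 < #|A|)%N -> (forall i, 0 <= a i) ->
  \prod_(i in A) a i <= (\sum_(i in A) a i ^+ #|A|) / #|A|%:R.
Proof.
move=> k0 a0.
have h' : \prod_(i in A) a i ^+ #|A| <= ((\sum_(i in A) a i ^+ #|A|) / #|A|%:R) ^+ #|A|.
  exact: (leif_AGM (A := A) (E := fun i => a i ^+ #|A|) (fun i _ => exprn_ge0 _ (a0 i))).
rewrite prodrXl in h'.
rewrite -(ler_pXn2r k0) // !nnegrE ?prodr_ge0 // divr_ge0 // sumr_ge0 // => i _.
exact: exprn_ge0.
Qed.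

Lemma amgm_sum (n : nat) (A : {set 'I_n}) (f : int -> R) (tau : Zn n) (r : seq int) :
  (0 < #|A|)%N -> uniq r -> fin_supp f ->
  \sum_(t <- r) \prod_(i in A) f (t - tau i) ^+ 2 <= fsum (fun u => f u ^+ (2 * #|A|)).
Proof.
move=> k0 ur ff.
have fk : fin_supp (fun u => f u ^+ (2 * #|A|)).
  move: ff => /fs_seq [rf [_ hf]]; apply: (@seq_fs _ _ _ rf) => t; apply: contraNT => tf.
  by rewrite (supp_out hf) // expr0n muln_eq0 /= (gtn_eqF k0) /= eqxx.
apply: le_trans (_ : \sum_(t <- r) (\sum_(i in A) f (t - tau i) ^+ (2 * #|A|)) / #|A|%:R <= _).
  apply: ler_sum => t _; apply: le_trans (amgm_pt _ _) _ => //.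
    by move=> i; apply: sqr_ge0.
  by under eq_bigr do rewrite -exprM.
rewrite -mulr_suml exchange_big /= ler_pdivrMr ?ltr0n //.
apply: le_trans (_ : \sum_(i in A) fsum (fun u => f u ^+ (2 * #|A|)) <= _).
  apply: ler_sum => i _; apply: shift_le_fsum => // t.
  by rewrite exprM exprn_ge0 // sqr_ge0.
by rewrite sumr_const mulr_natr.
Qed.

Lemma kk_le (k : nat) : (k%:R : R) ^+ k <= expR 1 ^+ k * k`!%:R.
Proof.
elim: k => [|k IH]; first by rewrite !expr0 mul1r.
have e0 : 0 <= expR (1 : R) by apply: ltW; apply: expR_gt0.
have hk : (k.+1%:R : R) ^+ k <= expR 1 * k%:R ^+ k.
  case: k IH => [|k] IH; first by rewrite !expr0 mulr1 (le_trans _ (expR_ge1Dx 1)) // lerDl.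
  have -> : (k.+2%:R : R) = k.+1%:R * (1 + k.+1%:R^-1).
    by rewrite mulrDr mulr1 mulfV ?pnatr_eq0 // natr1.
  rewrite exprMn mulrC ler_wpM2r ?exprn_ge0 //.
  apply: le_trans (_ : expR (k.+1%:R^-1) ^+ k.+1 <= _).
    apply: lerXn2r; last exact: expR_ge1Dx.
      by rewrite nnegrE addr_ge0 ?invr_ge0.
    by rewrite nnegrE ltW ?expR_gt0.
  by rewrite -expRM_natl mulfV ?pnatr_eq0.
rewrite exprS factS natrM.
apply: le_trans (_ : k.+1%:R * (expR 1 * k%:R ^+ k) <= _).
  by rewrite ler_wpM2l.
rewrite exprS.
have := ler_wpM2l (ler0n R k.+1) (ler_wpM2l e0 IH).
move=> h; apply: le_trans h _; rewrite !mulrA.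
rewrite le_eqVlt; apply/orP; left; apply/eqP; ring.
Qed.

Lemma ffact_le_exp (n k : nat) : (n ^_ k <= n ^ k)%N.
Proof.
rewrite ffact_prod; apply: (@leq_trans (\prod_(i < k) n)).
  by apply: leq_prod => i _; apply: leq_subr.
by rewrite prod_nat_const card_ord.
Qed.

Lemma binom_le (n k : nat) : (0 < k)%N ->
  ('C(n, k)%:R : R) <= (expR 1 * n%:R / k%:R) ^+ k.
Proof.
move=> k0.
have hF : (0 : R) < k`!%:R by rewrite ltr0n fact_gt0.
have hK : (0 : R) < k%:R ^+ k by rewrite exprn_gt0 // ltr0n.
have h1 : ('C(n, k)%:R : R) * k`!%:R <= n%:R ^+ k.
  by rewrite -natrM bin_ffact -natrX ler_nat ffact_le_exp.
have h2 := kk_le k.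
rewrite expr_div_n ler_pdivlMr // exprMn.
have C0 : (0 : R) <= 'C(n, k)%:R by [].
have E0 : (0 : R) <= expR 1 ^+ k by rewrite exprn_ge0 // ltW // expR_gt0.
apply: le_trans (_ : 'C(n, k)%:R * (expR 1 ^+ k * k`!%:R) <= _).
  exact: ler_wpM2l.

have X := ler_wpM2l E0 h1. nra.
Qed.

End Tools3.
Section Conv.
Variable R : realType.

Lemma lp2E (T : choiceType) (f : T -> R) : lpnorm 2 f = L2 f.
Proof.
rewrite /lpnorm /L2 powR12_sqrt; last by rewrite /fsum; apply: fsumr_ge0 => t _; apply: powR_ge0.
congr Num.sqrt; congr fsum; apply: funext => t.
by rewrite powR_mulrn // real_normK ?num_real.
Qed.

Lemma lp1E (T : choiceType) (f : T -> R) : lpnorm 1 f = fsum (fun t => `|f t|).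
Proof.
rewrite /lpnorm invr1 powRr1; last by rewrite /fsum; apply: fsumr_ge0 => t _; apply: powR_ge0.
by congr fsum; apply: funext => t; rewrite powRr1.
Qed.

Lemma fsum_pow_ge0 (f : int -> R) m : 0 <= fsum (fun u => f u ^+ (2 * m)).
Proof. by rewrite /fsum; apply: fsumr_ge0 => t _; rewrite exprM exprn_ge0 ?sqr_ge0. Qed.

Lemma lp2k (f : int -> R) k : (0 < k)%N ->
  lpnorm (2 * k)%:R f ^+ k = Num.sqrt (fsum (fun t => f t ^+ (2 * k))).
Proof.
move=> k0; rewrite /lpnorm -powR_mulrn ?powR_ge0 // -powRrM.
have -> : ((2 * k)%:R^-1 * k%:R : R) = 2^-1.
  have kn : (k%:R : R) != 0 by rewrite pnatr_eq0 -lt0n.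
  rewrite natrM invfM -mulrA mulVf ?mulr1 //.
rewrite powR12_sqrt; last by rewrite /fsum; apply: fsumr_ge0 => t _; apply: powR_ge0.
congr Num.sqrt; congr fsum; apply: funext => t.
by rewrite powR_mulrn // !exprM real_normK ?num_real.
Qed.

End Conv.

Section Main.
Variable R : realType.
Variables (x eps : int -> R) (r : seq int).
Hypotheses (ur : uniq r) (hx : supp_in x r) (he : supp_in eps r).

Definition yS n (S : {set 'I_n}) : 'I_n -> int -> R :=
  fun i => if i \in S then x else eps.

Lemma hyS n (S : {set 'I_n}) i : supp_in (yS S i) r.
Proof. by rewrite /yS; case: ifP. Qed.

Lemma conv_seq n (H : Zn n -> R) sH (y : 'I_n -> int -> R) t :
  uniq sH -> supp_in H sH ->
  convn H y t = \sum_(tau <- sH) H tau * \prod_(i < n) y i (t - tau i).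
Proof.
move=> us hH; rewrite /convn (fsumE us) // => tau tn.
by rewrite (supp_out hH) // mul0r.
Qed.

Lemma conv_fs n (i0 : 'I_n) (H : Zn n -> R) sH (y : 'I_n -> int -> R) :
  uniq sH -> supp_in H sH -> (forall i, supp_in (y i) r) -> fin_supp (convn H y).
Proof.
move=> us hH hy.
apply: (@seq_fs _ _ _ [seq tau i0 + u | tau : Zn n <- sH, u <- r]) => t.
apply: contraNT => tn; apply/eqP; rewrite (conv_seq _ _ us hH); apply: big1_seq => tau /andP[_ taus].
rewrite (bigD1 i0) //= (supp_out (hy i0)) ?mul0r ?mulr0 //.
apply: contra tn => h; apply/allpairsP; exists (tau, t - tau i0) => /=; split => //.
by rewrite addrC subrK.
Qed.

Lemma P_fs n (i0 : 'I_n) (tau : Zn n) (y : 'I_n -> int -> R) :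
  (forall i, supp_in (y i) r) -> fin_supp (fun t => \prod_(i < n) y i (t - tau i)).
Proof.
move=> hy; apply: (@seq_fs _ _ _ [seq tau i0 + u | u <- r]) => t.
apply: contraNT => tn; rewrite (bigD1 i0) //= (supp_out (hy i0)) ?mul0r //.
apply: contra tn => h; apply/mapP; exists (t - tau i0) => //; by rewrite addrC subrK.
Qed.

Lemma bound_B1 n (i0 : 'I_n) (H : Zn n -> R) sH (y : 'I_n -> int -> R) :
  uniq sH -> supp_in H sH -> (forall i, supp_in (y i) r) ->
  L2 (convn H y) <= L2 H * \prod_(i < n) fsum (fun u => `|y i u|).
Proof.
move=> us hH hy.
set W := \prod_(i < n) fsum (fun u => `|y i u|).
have W0 : 0 <= W by apply: prodr_ge0 => i _; rewrite /fsum; apply: fsumr_ge0 => u _.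
pose w t (tau : Zn n) := \prod_(i < n) `|y i (t - tau i)|.
have w0 t tau : 0 <= w t tau by apply: prodr_ge0 => i _.
have Sw1 t : \sum_(tau <- sH) w t tau <= W.
  have -> : \sum_(tau <- sH) w t tau = \sum_(sg <- [seq ([ffun i => t - tau i] : Zn n) | tau : Zn n <- sH])
      \prod_(i < n) `|y i (sg i)|.
    by rewrite big_map; apply: eq_bigr => tau _; apply: eq_bigr => i _; rewrite ffunE.
  apply: (prod_sum_le (r := r)) => //; rewrite map_inj_uniq // => a b /ffunP e; apply/ffunP => i.
  by have := e i; rewrite !ffunE => /addrI /oppr_inj.
have Sw2 tau (rc : seq int) : uniq rc -> \sum_(t <- rc) w t tau <= W.
  move=> urc.
  have -> : \sum_(t <- rc) w t tau = \sum_(sg <- [seq ([ffun i => t - tau i] : Zn n) | t <- rc])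
      \prod_(i < n) `|y i (sg i)|.
    by rewrite big_map; apply: eq_bigr => t _; apply: eq_bigr => i _; rewrite ffunE.
  apply: (prod_sum_le (r := r)) => //; rewrite map_inj_uniq // => a b /ffunP /(_ i0).
  by rewrite !ffunE => /addIr.
have S1 t : convn H y t ^+ 2 <= (\sum_(tau <- sH) H tau ^+ 2 * w t tau) * W.
  rewrite (conv_seq _ _ us hH) -real_normK ?num_real //.
  apply: (@le_trans _ _ ((\sum_(tau <- sH) `|H tau| * w t tau) ^+ 2)).
    apply: lerXn2r; rewrite ?nnegrE ?normr_ge0 //.
      by apply: sumr_ge0 => tau _; rewrite mulr_ge0.
    apply: le_trans (ler_norm_sum _ _ _) _; apply: ler_sum => tau _.
    by rewrite normrM normr_prod.
  apply: le_trans (wCS sH (fun tau => `|H tau|) (w0 t)) _.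
  have -> : \sum_(tau <- sH) `|H tau| ^+ 2 * w t tau = \sum_(tau <- sH) H tau ^+ 2 * w t tau.
    by apply: eq_bigr => tau _; rewrite real_normK ?num_real.
  rewrite ler_wpM2l ?Sw1 //; by apply: sumr_ge0 => tau _; rewrite mulr_ge0 ?sqr_ge0.
have /fs_seq [rc [urc hc]] := conv_fs i0 us hH hy.
rewrite (L2_seq urc hc) (L2_seq us hH).
rewrite -(ger0_norm W0) -sqrtr_sqr -sqrtrM; last by apply: sumr_ge0 => tau _; exact: sqr_ge0.
rewrite ler_sqrt; last by rewrite mulr_ge0 ?sqr_ge0 // sumr_ge0 // => tau _; rewrite sqr_ge0.
apply: le_trans (ler_sum _ (fun t _ => S1 t)) _.
rewrite -mulr_suml exchange_big /= expr2 mulrA ler_wpM2r // mulr_suml.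
apply: ler_sum => tau _; rewrite -mulr_sumr ler_wpM2l ?sqr_ge0 //; exact: Sw2.
Qed.

Definition Vx (k : nat) : R :=
  if k == 0%N then 1 else Num.sqrt (fsum (fun u => x u ^+ (2 * k))).
Definition Ve (m : nat) : R := Num.sqrt (fsum (fun u => eps u ^+ (2 * m))).

Lemma cardC_pos n (S : {set 'I_n}) : S != [set: 'I_n] -> (0 < #|~: S|)%N.
Proof.
move=> hS; rewrite lt0n cards_eq0; apply: contra hS => /eqP h.
by rewrite -(finset.setCK S) h finset.setC0.
Qed.

Lemma bound_P n (S : {set 'I_n}) (tau : Zn n) (rp : seq int) : S != [set: 'I_n] -> uniq rp ->
  Num.sqrt (\sum_(t <- rp) (\prod_(i < n) yS S i (t - tau i)) ^+ 2) <= Vx #|S| * Ve #|~: S|.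
Proof.
move=> hS urp.
have fx : fin_supp x := seq_fs hx.
have fe : fin_supp eps := seq_fs he.
have cS := cardC_pos hS.
have E t : (\prod_(i < n) yS S i (t - tau i)) ^+ 2 =
   (\prod_(i in S) x (t - tau i) ^+ 2) * \prod_(i in ~: S) eps (t - tau i) ^+ 2.
  rewrite -prodrXl (bigID (mem S)) /=; congr (_ * _).
    by apply: eq_bigr => i iS; rewrite /yS iS.
  apply: eq_big => i; first by rewrite finset.in_setC.
  by move=> /negbTE iS; rewrite /yS iS.
under eq_bigr do rewrite E.
rewrite /Vx /Ve; case: ifP => [/eqP S0|/negbT S0].
  have S0' : S = finset.set0 by apply/eqP; rewrite -cards_eq0 S0.
  subst S.
  under eq_bigr do rewrite big_set0 mul1r.
  rewrite mul1r ler_sqrt ?fsum_pow_ge0 //; exact: amgm_sum.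
rewrite -sqrtrM ?fsum_pow_ge0 // ler_sqrt ?mulr_ge0 ?fsum_pow_ge0 //.
have a0 t : 0 <= \prod_(i in S) x (t - tau i) ^+ 2 by apply: prodr_ge0 => i _; exact: sqr_ge0.
have b0 t : 0 <= \prod_(i in ~: S) eps (t - tau i) ^+ 2 by apply: prodr_ge0 => i _; exact: sqr_ge0.
apply: le_trans (_ : (\sum_(t <- rp) \prod_(i in S) x (t - tau i) ^+ 2) *
   (\sum_(t <- rp) \prod_(i in ~: S) eps (t - tau i) ^+ 2) <= _).
  rewrite mulr_suml big_seq [X in _ <= X]big_seq; apply: ler_sum => t tin.
  rewrite ler_wpM2l // (bigD1_seq t tin urp) /= lerDl sumr_ge0 //.
apply: ler_pM; rewrite ?sumr_ge0 //; apply: amgm_sum => //.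
by rewrite lt0n.
Qed.

Lemma bound_B2 n (S : {set 'I_n}) (H : Zn n -> R) sH :
  S != [set: 'I_n] -> uniq sH -> supp_in H sH ->
  L2 (convn H (yS S)) <= fsum (fun tau => `|H tau|) * (Vx #|S| * Ve #|~: S|).
Proof.
move=> hS us hH.
have [i0 _ _] : exists2 i, i \in [set: 'I_n] & i \notin S by apply/subsetPn; rewrite finset.subTset.
rewrite (@L2_ext _ _ _ (fun t => \sum_(tau <- sH) H tau * \prod_(i < n) yS S i (t - tau i)));
  last by move=> t; exact: conv_seq.
have [h1 _] := @L2_sum _ _ _ sH xpredT
   (fun tau t => H tau * \prod_(i < n) yS S i (t - tau i))
   (fun tau _ => fs_scale (H tau) (P_fs i0 tau (fun i => @hyS n S i))).
apply: le_trans h1 _.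
rewrite (fsumE us); last by move=> tau tn; rewrite (supp_out hH) ?normr0.
rewrite mulr_suml; apply: ler_sum => tau _; rewrite L2_scale ler_wpM2l //.
have /fs_seq [rp [urp hp]] := P_fs i0 tau (fun i => @hyS n S i).
rewrite (L2_seq urp hp); exact: bound_P.
Qed.

Lemma prod_expand n (u : 'I_n -> int) :
  \prod_(i < n) (x (u i) + eps (u i)) = \sum_(S : {set 'I_n}) \prod_(i < n) yS S i (u i).
Proof.
have e i : x (u i) + eps (u i) = \sum_(b : bool) (if b then x (u i) else eps (u i)).
  by rewrite big_bool.
rewrite (eq_bigr _ (fun i _ => e i)) bigA_distr_bigA /=.
rewrite (reindex (fun S : {set 'I_n} => [ffun i => i \in S])) /=.
  apply: eq_bigr => S _; apply: eq_bigr => i _; by rewrite ffunE /yS; case: (i \in S).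
exists (fun f : {ffun 'I_n -> bool} => [set i | f i]) => [S _|f _].
  by apply/setP => i; rewrite inE ffunE.
by apply/ffunP => i; rewrite ffunE inE.
Qed.

Lemma diff_decomp n (H : Zn n -> R) sH t : uniq sH -> supp_in H sH ->
  convpow H (x \+ eps) t - convpow H x t =
  \sum_(S : {set 'I_n} | S != [set: 'I_n]) convn H (yS S) t.
Proof.
move=> us hH; rewrite /convpow !(conv_seq _ _ us hH).
have -> : \sum_(tau <- sH) H tau * \prod_(i < n) (x \+ eps) (t - tau i) =
    \sum_(S : {set 'I_n}) convn H (yS S) t.
  have e tau : \prod_(i < n) (x \+ eps) (t - tau i) =
      \sum_(S : {set 'I_n}) \prod_(i < n) yS S i (t - tau i).
    exact: (prod_expand (fun i => t - tau i)).
  rewrite (eq_bigr _ (fun tau _ => congr1 (fun z => H tau * z) (e tau))).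
  under eq_bigr do rewrite mulr_sumr.
  rewrite exchange_big /=; apply: eq_bigr => S _; by rewrite (conv_seq _ _ us hH).
rewrite (bigD1 [set: 'I_n]) //= (conv_seq _ _ us hH).
have -> : \sum_(tau <- sH) H tau * \prod_(i < n) yS [set: 'I_n] i (t - tau i) =
    \sum_(tau <- sH) H tau * \prod_(i < n) x (t - tau i).
  by apply: eq_bigr => tau _; congr (_ * _); apply: eq_bigr => i _; rewrite /yS finset.in_setT.
by rewrite addrAC subrr add0r.
Qed.

Lemma group_sum n (G : nat -> R) :
  \sum_(S : {set 'I_n} | S != [set: 'I_n]) G #|S| = \sum_(k < n) 'C(n, k)%:R * G k.
Proof.
have e (k : 'I_n) : 'C(n, k)%:R * G k =
    \sum_(S : {set 'I_n}) (if #|S| == k then G #|S| else 0).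
  rewrite -big_mkcond /=.
  rewrite (eq_bigr (fun _ => G k)); last by move=> S /eqP ->.
  have -> : \sum_(S : {set 'I_n} | #|S| == k) G k =
      \sum_(S in [set S : {set 'I_n} | #|S| == k]) G k.
    by apply: eq_bigl => S; rewrite inE.
  by rewrite sumr_const card_draws card_ord mulr_natl.
rewrite (eq_bigr _ (fun k _ => e k)) exchange_big /= big_mkcond.
apply: eq_bigr => S _.
case: (ltnP #|S| n) => hS.
  have -> : S != [set: 'I_n].
    by apply: contraTneq hS => ->; rewrite cardsT card_ord ltnn.
  rewrite (bigD1 (Ordinal hS)) //= eqxx big1 ?addr0 // => k kn.
  rewrite ifF //; apply: contraNF kn => /eqP ek; apply/eqP/val_inj; by rewrite /= ek.
have -> : (S != [set: 'I_n]) = false.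
  by apply/negbF; rewrite eqEcard finset.subsetT cardsT card_ord hS.
rewrite big1 // => k _; rewrite ifF //; apply: gtn_eqF.
exact: leq_trans (ltn_ord k) hS.
Qed.

Lemma prod_yS n (S : {set 'I_n}) (F : (int -> R) -> R) :
  \prod_(i < n) F (yS S i) = F x ^+ #|S| * F eps ^+ (n - #|S|).
Proof.
rewrite (bigID (mem S)) /=; congr (_ * _).
  by rewrite -prodr_const; apply: eq_bigr => i iS; rewrite /yS iS.
have -> : (n - #|S|)%N = #|~: S| by move: (cardsC S); rewrite card_ord => h; rewrite -{1}h addKn.
rewrite -prodr_const; apply: eq_big => i; first by rewrite finset.in_setC.
by move=> /negbTE iS; rewrite /yS iS.
Qed.

Lemma k_term1 n k : (k < n)%N ->
  'C(n, k)%:R * (fsum (fun u => `|x u|) ^+ k * fsum (fun u => `|eps u|) ^+ (n - k))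
  <= term1 n k x eps.
Proof.
move=> kn; rewrite /term1 !lp1E.
have X0 : 0 <= fsum (fun u => `|x u|) by rewrite /fsum; apply: fsumr_ge0.
have E0 : 0 <= fsum (fun u => `|eps u|) by rewrite /fsum; apply: fsumr_ge0.
case: eqP => [->|/eqP k0]; first by rewrite bin0 expr0 !mul1r.
rewrite -mulrA; apply: ler_wpM2r; first by rewrite mulr_ge0 ?exprn_ge0.
by apply: binom_le; rewrite lt0n.
Qed.

Lemma k_term2 n k : (k < n)%N ->
  'C(n, k)%:R * (Vx k * Ve (n - k)) <= term2 n k x eps.
Proof.
move=> kn; rewrite /term2 /Vx /Ve (lp2k eps (k := (n - k)%N)); last by rewrite subn_gt0.
case: eqP => [->|/eqP k0]; first by rewrite bin0 !mul1r.
rewrite lp2k; last by rewrite lt0n.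
rewrite mulrA; apply: ler_wpM2r; first exact: sqrtr_ge0.
apply: ler_wpM2r; first exact: sqrtr_ge0.
by apply: binom_le; rewrite lt0n.
Qed.

Lemma per_n n (H : Zn n -> R) : fin_supp H ->
  [/\ fin_supp (fun t => convpow H (x \+ eps) t - convpow H x t),
      L2 (fun t => convpow H (x \+ eps) t - convpow H x t)
        <= lpnorm 2 H * \sum_(k < n) term1 n k x eps
    & L2 (fun t => convpow H (x \+ eps) t - convpow H x t)
        <= lpnorm 1 H * \sum_(k < n) term2 n k x eps].
Proof.
move=> fH; have /fs_seq [sH [us hH]] := fH.
have ge t : convpow H (x \+ eps) t - convpow H x t =
    \sum_(S : {set 'I_n} | S != [set: 'I_n]) convn H (yS S) t.
  exact: (diff_decomp t us hH).
have [h1 h2] : L2 (fun t => \sum_(S : {set 'I_n} | S != [set: 'I_n]) convn H (yS S) t)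
    <= \sum_(S : {set 'I_n} | S != [set: 'I_n]) L2 (convn H (yS S)) /\
    fin_supp (fun t => \sum_(S : {set 'I_n} | S != [set: 'I_n]) convn H (yS S) t).
  apply: L2_sum => S hS.
  have [i0 _ _] : exists2 i, i \in [set: 'I_n] & i \notin S.
    by apply/subsetPn; rewrite finset.subTset.
  apply: (conv_fs i0 us hH) => i; exact: hyS.
have eg : (fun t => convpow H (x \+ eps) t - convpow H x t) =
    (fun t => \sum_(S : {set 'I_n} | S != [set: 'I_n]) convn H (yS S) t).
  by apply: funext => t; exact: ge.
rewrite eg; split => //.
- rewrite lp2E; apply: le_trans h1 _.
  set X1 := fsum (fun u => `|x u|); set E1 := fsum (fun u => `|eps u|).
  apply: (@le_trans _ _ (\sum_(S : {set 'I_n} | S != [set: 'I_n])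
      L2 H * (X1 ^+ #|S| * E1 ^+ (n - #|S|)))).
    apply: ler_sum => S hS.
    have [i0 _ _] : exists2 i, i \in [set: 'I_n] & i \notin S.
      by apply/subsetPn; rewrite finset.subTset.
    rewrite /X1 /E1 -(prod_yS S (fun f => fsum (fun u => `|f u|))).
    apply: (bound_B1 i0 us hH) => i; exact: hyS.
  rewrite -mulr_sumr (group_sum n (fun k => X1 ^+ k * E1 ^+ (n - k))) ler_wpM2l ?L2_ge0 //.
  apply: ler_sum => k _; exact: k_term1.
- rewrite lp1E; apply: le_trans h1 _.
  apply: (@le_trans _ _ (\sum_(S : {set 'I_n} | S != [set: 'I_n])
      fsum (fun tau => `|H tau|) * (Vx #|S| * Ve (n - #|S|)))).
    apply: ler_sum => S hS.
    have -> : (n - #|S|)%N = #|~: S| by move: (cardsC S); rewrite card_ord => h; rewrite -{1}h addKn.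
    exact: (bound_B2 hS us hH).
  rewrite -mulr_sumr (group_sum n (fun k => Vx k * Ve (n - k))) ler_wpM2l //.
    by rewrite /fsum; apply: fsumr_ge0.
  apply: ler_sum => k _; exact: k_term2.
Qed.

End Main.

Unset Implicit Arguments.


Theorem theorem19 (R : realType) (N : nat) (H : forall n : nat, Zn n -> R)
  (x eps : int -> R) :
  (forall n : nat, (n <= N)%N -> fin_supp (H n)) ->
  fin_supp x -> fin_supp eps ->
  lpnorm 2 (fun t => volterra N H (x \+ eps) t - volterra N H x t)
  <= Num.min (bound1 N H x eps) (bound2 N H x eps).
Proof.
move=> hH fx fe.
have /fs_seq [rx [_ hrx]] := fx.
have /fs_seq [re [_ hre]] := fe.
pose r := undup (rx ++ re).
have ur : uniq r := undup_uniq _.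
have hx : supp_in x r by move=> t /hrx; rewrite mem_undup mem_cat => ->.
have he : supp_in eps r by move=> t /hre; rewrite mem_undup mem_cat orbC => ->.
rewrite lp2E.
have eD t : volterra N H (x \+ eps) t - volterra N H x t =
    \sum_(n < N.+1) (convpow (H n) (x \+ eps) t - convpow (H n) x t).
  by rewrite /volterra sumrB.
rewrite (L2_ext eD).
have [h1 _] : L2 (fun t => \sum_(n < N.+1) (convpow (H n) (x \+ eps) t - convpow (H n) x t))
    <= \sum_(n < N.+1) L2 (fun t => convpow (H n) (x \+ eps) t - convpow (H n) x t) /\
    fin_supp (fun t => \sum_(n < N.+1) (convpow (H n) (x \+ eps) t - convpow (H n) x t)).
  apply: L2_sum => n _.
  have hn : (n <= N)%N by rewrite -ltnS.
  have [] := per_n ur hx he (hH n hn).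
  done.
rewrite le_min; apply/andP; split; apply: le_trans h1 _; apply: ler_sum => n _;
  have hn : (n <= N)%N by rewrite -ltnS.
- by have [] := per_n ur hx he (hH n hn).
- by have [] := per_n ur hx he (hH n hn).
Qed.
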